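(* Suppose $r=2r_1$ is even and put $t=s_1(s_2s_3)^{r_1}\in G$. (1) If $t^2(s_2t^2s_2)=(s_2t^2s_2)t^2$ in $G$, then one of the following holds: (a) $\Delta=0$; (b) $\alpha=1$ (so $p=3$) and $\Delta=4-\gamma$; (c) $\alpha=2$, $\beta=1$, $\gamma=2$, $l=-1$, $m=-2$ (so $p=r=4$, $q=3$), and $G$ is isomorphic to the Coxeter group $W(B_3)$. (2) If $t^2(s_3t^2s_3)=(s_3t^2s_3)t^2$ in $G$, then one of the following holds: (a) $\Delta=0$; (b) $\beta=1$ (so $q=3$) and $\Delta=4-\gamma$; (c) $\alpha=1$, $\beta=2$, $\gamma=2$, $l=-2$, $m=-1$ (so $q=r=4$, $p=3$), and $G$ is isomorphic to $W(B_3)$.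
   Context: Setting. Let $p,q,r\ge 3$ be integers and $W=W(p,q,r)$ the Coxeter group with generators $s_1,s_2,s_3$ and relations $s_i^2=1$, $(s_1s_2)^p=(s_1s_3)^q=(s_2s_3)^r=1$. Let $\alpha=4\cos^2(\pi k_1/p)$, $\beta=4\cos^2(\pi k_2/q)$, $\gamma=4\cos^2(\pi k_3/r)$ with $\gcd(k_1,p)=\gcd(k_2,q)=\gcd(k_3,r)=1$ (so $0<\alpha,\beta,\gamma<4$), and let $l,m\in\mathbb{C}$ with $lm=\gamma$. Let $K\subset\mathbb{C}$ be a field containing $\alpha,\beta,\gamma,l,m$, and $M$ a $3$-dimensional $K$-vector space with basis $(a_1,a_2,a_3)$. The reflection representation $R:W\to GL(M)$ with parameters $(\alpha,\beta,\gamma;l,m)$ is defined by: for $x=\lambda_1a_1+\lambda_2a_2+\lambda_3a_3$, $R(s_1)x=x-(2\lambda_1-\alpha\lambda_2-\beta\lambda_3)a_1$, $R(s_2)x=x-(-\lambda_1+2\lambda_2-l\lambda_3)a_2$, $R(s_3)x=x-(-\lambda_1-m\lambda_2+2\lambda_3)a_3$. Put $G=R(W)$ and write $s_i$ for $R(s_i)$. Let $\Delta=8-2\alpha-2\beta-2\gamma-(\alpha l+\beta m)$; $R$ is reducible iff $\Delta=0$. *)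

(* Defs.v *)
From HB Require Import structures.
From mathcomp Require Import all_boot all_order all_algebra all_fingroup.
Set Implicit Arguments. Unset Strict Implicit. Unset Printing Implicit Defensive.
Import GRing.Theory Num.Theory.
Local Open Scope ring_scope.

(* 4 cos^2 (pi k / p) with gcd(k,p)=1 is exactly 2 + z + z^-1 for z a
   primitive p-th root of unity (z = exp(2 pi i k / p)). *)
Definition fourcos2 (K : numClosedFieldType) (z : K) : K := 2 + z + z^-1.

(* Matrix of R(s_i) in the basis (a_1,a_2,a_3), acting on coordinate
   column vectors: R(s_i) = 1 - e_i * c_i, where c_i is the row of
   coefficients of the linear form defining R(s_i). *)
Definition refl_row (K : numClosedFieldType) (al be l m : K) (i : 'I_3) : 'rV[K]_3 :=
  match val i with
  | 0%N => \row_(j < 3) [:: 2; - al; - be]`_j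
  | 1%N => \row_(j < 3) [:: -1; 2; - l]`_j
  | _ => \row_(j < 3) [:: -1; - m; 2]`_j
  end.

Definition reflR (K : numClosedFieldType) (al be l m : K) (i : 'I_3) : 'M[K]_3 :=
  \matrix_(a < 3, b < 3) ((a == b)%:R - (a == i)%:R * refl_row al be l m i 0 b).

Definition s1 {K : numClosedFieldType} (al be l m : K) := reflR al be l m 0.
Definition s2 {K : numClosedFieldType} (al be l m : K) := reflR al be l m 1.
Definition s3 {K : numClosedFieldType} (al be l m : K) := reflR al be l m 2.

(* G = R(W): the subgroup of GL(M) generated by the three reflections
   (each is an involution, so the generated monoid is the group). *)
Inductive inG (K : numClosedFieldType) (al be l m : K) : 'M[K]_3 -> Prop :=
  | inG1 : inG al be l m 1
  | inGmul (i : 'I_3) (x : 'M[K]_3) : inG al be l m x -> inG al be l m (reflR al be l m i * x).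

Definition Delta (K : numClosedFieldType) (al be ga l m : K) : K :=
  8 - 2 * al - 2 * be - 2 * ga - (al * l + be * m).

(* W(B_3) realised as the hyperoctahedral group of signed permutations of
   {1,2,3}: permutations of 'I_3 * bool commuting with the sign flip. *)
Definition flip3 (x : 'I_3 * bool) : 'I_3 * bool := (x.1, ~~ x.2).
Definition WB3 : {set {perm ('I_3 * bool)}} :=
  [set s : {perm ('I_3 * bool)} | [forall x, s (flip3 x) == flip3 (s x)]].

Definition isom_WB3 (K : numClosedFieldType) (G : 'M[K]_3 -> Prop) : Prop :=
  exists f : 'M[K]_3 -> {perm ('I_3 * bool)},
    [/\ (forall x y, G x -> G y -> f (x * y) = (f x * f y)%g),
        (forall x y, G x -> G y -> f x = f y -> x = y) &
        (forall g, g \in WB3 <-> exists2 x, G x & f x = g)].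

(* Main.v *)
Require Import Defs.
From HB Require Import structures.
From mathcomp Require Import all_boot all_order all_algebra all_fingroup.
Import GRing.Theory Num.Theory.
Local Open Scope ring_scope.
From mathcomp Require Import ring zify.
From mathcomp Require Import cyclic separable cyclotomic.
Set Implicit Arguments. Unset Strict Implicit. Unset Printing Implicit Defensive.
Import GRing.Theory Num.Theory.
Local Open Scope ring_scope.

Section Mk3.
Variable K : comNzRingType.
Definition mk3 (a b c d e f g h i : K) : 'M[K]_3 :=
  \matrix_(x < 3, y < 3) nth 0 (nth [::] [:: [:: a;b;c]; [:: d;e;f]; [:: g;h;i]] x) y.

Lemma mk3_mul a b c d e f g h i a' b' c' d' e' f' g' h' i' :
  mk3 a b c d e f g h i * mk3 a' b' c' d' e' f' g' h' i' =
  mk3 (a*a'+b*d'+c*g') (a*b'+b*e'+c*h') (a*c'+b*f'+c*i')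
      (d*a'+e*d'+f*g') (d*b'+e*e'+f*h') (d*c'+e*f'+f*i')
      (g*a'+h*d'+i*g') (g*b'+h*e'+i*h') (g*c'+h*f'+i*i').
Proof.
apply/matrixP => x y; rewrite !mxE !big_ord_recr big_ord0 /= !mxE.
by case: x => [[|[|[|]]] ?] //=; case: y => [[|[|[|]]] ?] //=; rewrite add0r.
Qed.

Lemma mk3_one : (1 : 'M[K]_3) = mk3 1 0 0 0 1 0 0 0 1.
Proof.
apply/matrixP => x y; rewrite !mxE.
by case: x => [[|[|[|]]] ?] //=; case: y => [[|[|[|]]] ?].
Qed.

Lemma mk3_scale (k a b c d e f g h i : K) :
  k *: mk3 a b c d e f g h i = mk3 (k*a) (k*b) (k*c) (k*d) (k*e) (k*f) (k*g) (k*h) (k*i).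
Proof.
apply/matrixP => x y; rewrite !mxE.
by case: x => [[|[|[|]]] ?] //=; case: y => [[|[|[|]]] ?] //=; rewrite mulr0.
Qed.

Lemma mk3_add a b c d e f g h i a' b' c' d' e' f' g' h' i' :
  mk3 a b c d e f g h i + mk3 a' b' c' d' e' f' g' h' i' =
  mk3 (a+a') (b+b') (c+c') (d+d') (e+e') (f+f') (g+g') (h+h') (i+i').
Proof.
apply/matrixP => x y; rewrite !mxE.
by case: x => [[|[|[|]]] ?] //=; case: y => [[|[|[|]]] ?] //=; rewrite addr0.
Qed.

Lemma mk3_opp a b c d e f g h i :
  - mk3 a b c d e f g h i = mk3 (-a) (-b) (-c) (-d) (-e) (-f) (-g) (-h) (-i).
Proof.
apply/matrixP => x y; rewrite !mxE.
by case: x => [[|[|[|]]] ?] //=; case: y => [[|[|[|]]] ?] //=; rewrite oppr0.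
Qed.
End Mk3.

Section Refl.
Variable K : numClosedFieldType.
Variables al be l m : K.
Lemma S1E : s1 al be l m = mk3 (-1) al be 0 1 0 0 0 1.
Proof.
apply/matrixP => x y; rewrite !mxE /=.
case: x => [[|[|[|]]] ?] //=; case: y => [[|[|[|]]] ?] //=; ring.
Qed.
Lemma S2E : s2 al be l m = mk3 1 0 0 1 (-1) l 0 0 1.
Proof.
apply/matrixP => x y; rewrite !mxE /=.
case: x => [[|[|[|]]] ?] //=; case: y => [[|[|[|]]] ?] //=; ring.
Qed.
Lemma S3E : s3 al be l m = mk3 1 0 0 0 1 0 1 m (-1).
Proof.
apply/matrixP => x y; rewrite !mxE /=.
case: x => [[|[|[|]]] ?] //=; case: y => [[|[|[|]]] ?] //=; ring.
Qed.
End Refl.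

Lemma mk3_ext (K : comNzRingType) (a b c d e f g h i a' b' c' d' e' f' g' h' i' : K) :
  a = a' -> b = b' -> c = c' -> d = d' -> e = e' -> f = f' -> g = g' -> h = h' -> i = i' ->
  mk3 a b c d e f g h i = mk3 a' b' c' d' e' f' g' h' i'.
Proof. by move=> -> -> -> -> -> -> -> -> ->. Qed.



Section Wsec.
Variable K : numClosedFieldType.

Lemma prim_half (r1 : nat) (z : K) : (2 * r1).-primitive_root z -> z ^+ r1 = -1.
Proof.
move=> pz.
have r1p : (0 < r1)%N.
  by case: r1 pz => // pz; move: (prim_order_gt0 pz).
have h1 : (z ^+ r1) ^+ 2 = 1.
  by rewrite -exprM mulnC (prim_expr_order pz).
have h2 : z ^+ r1 != 1.
  by rewrite -(prim_order_dvd pz) gtnNdvd // ltn_Pmull.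
have : (z ^+ r1 - 1) * (z ^+ r1 + 1) = 0.
  by rewrite mulrDr mulr1 mulrBl mul1r -expr2 h1; ring.
move/eqP; rewrite mulf_eq0 subr_eq0 (negbTE h2) /= addr_eq0 => /eqP //.
Qed.

Variables (l m z : K) (r1 : nat).
Hypothesis pz : (2 * r1).-primitive_root z.
Hypothesis r1gt : (1 < r1)%N.
Hypothesis lmE : l * m = 2 + z + z^-1.

Lemma z_neq0 : z != 0.
Proof.
apply/eqP => z0; move: (prim_expr_order pz); rewrite z0 expr0n.
rewrite muln_eq0 /= eqn0Ngt (ltnW r1gt) /=.
by move/eqP; rewrite eq_sym oner_eq0.
Qed.

Lemma z2_neq1 : z ^+ 2 != 1.
Proof.
rewrite -(prim_order_dvd pz) gtnNdvd //.
by have := r1gt; rewrite -(ltn_pmul2l (isT : (0 < 2)%N)) muln1.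
Qed.

Lemma d_neq0 : 4 - l * m != 0.
Proof.
rewrite lmE.
have -> : 4 - (2 + z + z^-1) = - z^-1 * (z - 1) ^+ 2.
  by field; exact: z_neq0.
rewrite mulf_neq0 // ?oppr_eq0 ?invr_eq0 ?z_neq0 // expf_neq0 // subr_eq0.
apply: contra z2_neq1 => /eqP ->; by rewrite expr1n.
Qed.


Variables al be : K.
Let M := s2 al be l m * s3 al be l m.
Let E := mk3 1 0 0 ((2+l)/(4 - l * m)) 0 0 ((2+m)/(4 - l * m)) 0 0.
Let F := mk3 0 0 0 (-(2+l)/(4 - l * m)) 1 0 (-(2+m)/(4 - l * m)) 0 1.

Lemma ME : M * E = E.
Proof.
have dn := d_neq0.
rewrite /M S2E S3E /E !mk3_mul; apply: mk3_ext; field => //.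
Qed.

Lemma EF : E + F = 1.
Proof.
have dn := d_neq0.
rewrite /E /F mk3_add mk3_one; apply: mk3_ext; field => //.
Qed.

Lemma MMF : M * (M * F) = (l * m - 2) *: (M * F) - F.
Proof.
have dn := d_neq0.
rewrite /M S2E S3E /F !mk3_mul mk3_scale mk3_opp mk3_add; apply: mk3_ext; field => //.
Qed.

Lemma Cheb n : (z - z^-1) *: (M ^+ n.+1 * F) =
  (z ^+ n.+1 - z^-1 ^+ n.+1) *: (M * F) - (z ^+ n - z^-1 ^+ n) *: F.
Proof.
have zz : z * z^-1 = 1 by rewrite mulfV // z_neq0.
elim: n => [|n IH]; first by rewrite expr1 !expr0 subrr scale0r subr0.
rewrite exprS -mulrA scalerAr IH mulrBr -!scalerAr MMF.
rewrite scalerBr scalerA addrAC -scalerBl; congr (_ - _); congr (_ *: _).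
by rewrite lmE !exprS; field; exact: z_neq0.
Qed.

Lemma MnE n : M ^+ n * E = E.
Proof. by elim: n => [|n IH]; rewrite ?expr0 ?mul1r // exprS -mulrA IH ME. Qed.

Lemma Wform : M ^+ r1 = mk3 1 0 0 (2*(2+l)/(4 - l * m)) (-1) 0 (2*(2+m)/(4 - l * m)) 0 (-1).
Proof.
have zn := z_neq0.
have zh := prim_half pz.
have zd : z - z^-1 != 0.
  rewrite subr_eq0; apply: contra z2_neq1 => /eqP h.
  by rewrite expr2 {2}h mulfV.
have MF : M ^+ r1 * F = - F.
  case: r1 r1gt zh Cheb => // n _ zh Ch.
  have e1 : z ^+ n.+1 - z^-1 ^+ n.+1 = 0 by rewrite exprVn zh invrN invr1 subrr.
  have zn' : z ^+ n = - z^-1.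
    by apply: (mulfI zn); rewrite -exprS zh mulrN mulfV.
  have e2 : z ^+ n - z^-1 ^+ n = z - z^-1.
    by rewrite exprVn zn' invrN invrK opprK addrC.
  have := Ch n; rewrite e1 e2 scale0r sub0r => h.
  by apply: (scalerI zd); rewrite h scalerN.
have -> : M ^+ r1 = M ^+ r1 * (E + F) by rewrite EF mulr1.
rewrite mulrDr MnE MF /E /F mk3_opp mk3_add.
have dn := d_neq0.
apply: mk3_ext; field => //.
Qed.
End Wsec.


Section Comm.
Variables (K : numClosedFieldType) (al be l m : K).
Hypothesis dn : 4 - l * m != 0.
Definition Wm := mk3 1 0 0 (2 * (2 + l) / (4 - l * m)) (-1) 0 (2 * (2 + m) / (4 - l * m)) 0 (-1).
Definition Tp := mk3 (4 * al ^+ 2 * l ^+ 2 + 16 * al ^+ 2 * l + 16 * al ^+ 2 + 8 * al * be * l * m + 16 * al * be * l + 16 * al * be * m + 32 * al * be + 6 * al * l ^+ 2 * m + 12 * al * l * m - 24 * al * l - 48 * al + 4 * be ^+ 2 * m ^+ 2 + 16 * be ^+ 2 * m + 16 * be ^+ 2 + 6 * be * l * m ^+ 2 + 12 * be * l * m - 24 * be * m - 48 * be + l ^+ 2 * m ^+ 2 - 8 * l * m + 16) (2 * al ^+ 2 * l ^+ 2 * m + 4 * al ^+ 2 * l * m - 8 * al ^+ 2 * l - 16 * al ^+ 2 + 2 * al * be * l * m ^+ 2 + 4 * al * be * l * m - 8 * al * be * m - 16 * al * be + 2 * al * l ^+ 2 * m ^+ 2 - 16 * al * l * m + 32 * al)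 (2 * al * be * l ^+ 2 * m + 4 * al * be * l * m - 8 * al * be * l - 16 * al * be + 2 * be ^+ 2 * l * m ^+ 2 + 4 * be ^+ 2 * l * m - 8 * be ^+ 2 * m - 16 * be ^+ 2 + 2 * be * l ^+ 2 * m ^+ 2 - 16 * be * l * m + 32 * be) (4 * al * l ^+ 2 + 16 * al * l + 16 * al + 4 * be * l * m + 8 * be * l + 8 * be * m + 16 * be + 4 * l ^+ 2 * m + 8 * l * m - 16 * l - 32) (2 * al * l ^+ 2 * m + 4 * al * l * m - 8 * al * l - 16 * al + l ^+ 2 * m ^+ 2 - 8 * l * m + 16) (2 * be * l ^+ 2 * m + 4 * be * l * m - 8 * be * l - 16 * be) (4 * al * l * m + 8 * al * l + 8 * al * m + 16 * al + 4 * be * m ^+ 2 + 16 * be * m + 16 * be + 4 * l * m ^+ 2 + 8 * l * m - 16 * m - 32) (2 * al * l * m ^+ 2 + 4 * al * l * m - 8 * al * m - 16 * al) (2 * be * l * m ^+ 2 + 4 * be * l * m - 8 * be * m - 16 * be + l ^+ 2 * m ^+ 2 - 8 * l * m + 16).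
Definition U2p := mk3 (2 * al ^+ 2 * l ^+ 2 * m + 4 * al ^+ 2 * l ^+ 2 + 4 * al ^+ 2 * l * m + 8 * al ^+ 2 * l + 2 * al * be * l * m ^+ 2 + 12 * al * be * l * m + 16 * al * be * l + 8 * al * be * m + 16 * al * be + 2 * al * l ^+ 2 * m ^+ 2 + 6 * al * l ^+ 2 * m - 4 * al * l * m - 24 * al * l - 16 * al + 4 * be ^+ 2 * m ^+ 2 + 16 * be ^+ 2 * m + 16 * be ^+ 2 + 6 * be * l * m ^+ 2 + 12 * be * l * m - 24 * be * m - 48 * be + l ^+ 2 * m ^+ 2 - 8 * l * m + 16) (- 2 * al ^+ 2 * l ^+ 2 * m - 4 * al ^+ 2 * l * m + 8 * al ^+ 2 * l + 16 * al ^+ 2 - 2 * al * be * l * m ^+ 2 - 4 * al * be * l * m + 8 * al * be * m + 16 * al * be - 2 * al * l ^+ 2 * m ^+ 2 + 16 * al * l * m - 32 * al) (2 * al ^+ 2 * l ^+ 3 * m + 4 * al ^+ 2 * l ^+ 2 * m - 8 * al ^+ 2 * l ^+ 2 - 16 * al ^+ 2 * l + 2 * al * be * l ^+ 2 * m ^+ 2 + 6 * al * be * l ^+ 2 * m - 4 * al * be * l * m - 24 * al * be * l - 16 * al * be + 2 * al * l ^+ 3 * m ^+ 2 - 16 * al * l ^+ 2 * m + 32 * al * l + 2 * be ^+ 2 * l * m ^+ 2 + 4 * be ^+ 2 * l * m - 8 * be ^+ 2 * m - 16 * be ^+ 2 + 2 * be * l ^+ 2 * m ^+ 2 - 16 *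 be * l * m + 32 * be) (2 * al ^+ 2 * l ^+ 2 * m + 4 * al ^+ 2 * l ^+ 2 + 4 * al ^+ 2 * l * m + 8 * al ^+ 2 * l + 2 * al * be * l * m ^+ 2 + 12 * al * be * l * m + 16 * al * be * l + 8 * al * be * m + 16 * al * be + 4 * al * l ^+ 2 * m ^+ 2 + 12 * al * l ^+ 2 * m + 4 * al * l ^+ 2 - 8 * al * l * m - 32 * al * l - 16 * al + 4 * be ^+ 2 * m ^+ 2 + 16 * be ^+ 2 * m + 16 * be ^+ 2 + 10 * be * l * m ^+ 2 + 24 * be * l * m + 8 * be * l - 32 * be * m - 64 * be + 4 * l ^+ 2 * m ^+ 2 + 4 * l ^+ 2 * m - 24 * l * m - 16 * l + 32) (- 2 * al ^+ 2 * l ^+ 2 * m - 4 * al ^+ 2 * l * m + 8 * al ^+ 2 * l + 16 * al ^+ 2 - 2 * al * be * l * m ^+ 2 - 4 * al * be * l * m + 8 * al * be * m + 16 * al * be - 4 * al * l ^+ 2 * m ^+ 2 - 2 * al * l ^+ 2 * m + 28 * al * l * m + 8 * al * l - 48 * al + l ^+ 2 * m ^+ 2 - 8 * l * m + 16) (2 * al ^+ 2 * l ^+ 3 * m + 4 * al ^+ 2 * l ^+ 2 * m - 8 * al ^+ 2 * l ^+ 2 - 16 * al ^+ 2 * l + 2 * al * be * l ^+ 2 * m ^+ 2 + 6 * al * be * l ^+ 2 * m - 4 * al * be * l * m - 24 * al * be * l - 16 * al * be + 4 * al * l ^+ 3 * m ^+ 2 + 2 * al * l ^+ 3 * m - 28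 * al * l ^+ 2 * m - 8 * al * l ^+ 2 + 48 * al * l + 2 * be ^+ 2 * l * m ^+ 2 + 4 * be ^+ 2 * l * m - 8 * be ^+ 2 * m - 16 * be ^+ 2 + 4 * be * l ^+ 2 * m ^+ 2 + 2 * be * l ^+ 2 * m - 28 * be * l * m - 8 * be * l + 48 * be) (2 * al * l * m ^+ 2 + 8 * al * l * m + 8 * al * l + 4 * be * m ^+ 2 + 16 * be * m + 16 * be + 4 * l * m ^+ 2 + 8 * l * m - 16 * m - 32) (- 2 * al * l * m ^+ 2 - 4 * al * l * m + 8 * al * m + 16 * al) (2 * al * l ^+ 2 * m ^+ 2 + 4 * al * l ^+ 2 * m - 8 * al * l * m - 16 * al * l + 2 * be * l * m ^+ 2 + 4 * be * l * m - 8 * be * m - 16 * be + l ^+ 2 * m ^+ 2 - 8 * l * m + 16).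
Definition U3p := mk3 (4 * al ^+ 2 * l ^+ 2 + 16 * al ^+ 2 * l + 16 * al ^+ 2 + 2 * al * be * l ^+ 2 * m + 12 * al * be * l * m + 8 * al * be * l + 16 * al * be * m + 16 * al * be + 6 * al * l ^+ 2 * m + 12 * al * l * m - 24 * al * l - 48 * al + 2 * be ^+ 2 * l * m ^+ 2 + 4 * be ^+ 2 * l * m + 4 * be ^+ 2 * m ^+ 2 + 8 * be ^+ 2 * m + 2 * be * l ^+ 2 * m ^+ 2 + 6 * be * l * m ^+ 2 - 4 * be * l * m - 24 * be * m - 16 * be + l ^+ 2 * m ^+ 2 - 8 * l * m + 16) (2 * al ^+ 2 * l ^+ 2 * m + 4 * al ^+ 2 * l * m - 8 * al ^+ 2 * l - 16 * al ^+ 2 + 2 * al * be * l ^+ 2 * m ^+ 2 + 6 * al * be * l * m ^+ 2 - 4 * al * be * l * m - 24 * al * be * m - 16 * al * be + 2 * al * l ^+ 2 * m ^+ 2 - 16 * al * l * m + 32 * al + 2 * be ^+ 2 * l * m ^+ 3 + 4 * be ^+ 2 * l * m ^+ 2 - 8 * be ^+ 2 * m ^+ 2 - 16 * be ^+ 2 * m + 2 * be * l ^+ 2 * m ^+ 3 - 16 * be * l * m ^+ 2 + 32 * be * m) (- 2 * al * be * l ^+ 2 * m - 4 * al * be * l * m + 8 * al * be * l + 16 * al * be - 2 * be ^+ 2 * l * m ^+ 2 - 4 * be ^+ 2 * l * m + 8 * be ^+ 2 * m + 16 * be ^+ 2 - 2 * be * l ^+ 2 * m ^+ 2 + 16 *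 be * l * m - 32 * be) (4 * al * l ^+ 2 + 16 * al * l + 16 * al + 2 * be * l ^+ 2 * m + 8 * be * l * m + 8 * be * m + 4 * l ^+ 2 * m + 8 * l * m - 16 * l - 32) (2 * al * l ^+ 2 * m + 4 * al * l * m - 8 * al * l - 16 * al + 2 * be * l ^+ 2 * m ^+ 2 + 4 * be * l * m ^+ 2 - 8 * be * l * m - 16 * be * m + l ^+ 2 * m ^+ 2 - 8 * l * m + 16) (- 2 * be * l ^+ 2 * m - 4 * be * l * m + 8 * be * l + 16 * be) (4 * al ^+ 2 * l ^+ 2 + 16 * al ^+ 2 * l + 16 * al ^+ 2 + 2 * al * be * l ^+ 2 * m + 12 * al * be * l * m + 8 * al * be * l + 16 * al * be * m + 16 * al * be + 10 * al * l ^+ 2 * m + 24 * al * l * m - 32 * al * l + 8 * al * m - 64 * al + 2 * be ^+ 2 * l * m ^+ 2 + 4 * be ^+ 2 * l * m + 4 * be ^+ 2 * m ^+ 2 + 8 * be ^+ 2 * m + 4 * be * l ^+ 2 * m ^+ 2 + 12 * be * l * m ^+ 2 - 8 * be * l * m + 4 * be * m ^+ 2 - 32 * be * m - 16 * be + 4 * l ^+ 2 * m ^+ 2 + 4 * l * m ^+ 2 - 24 * l * m - 16 * m + 32) (2 * al ^+ 2 * l ^+ 2 * m + 4 * al ^+ 2 * l * m - 8 * al ^+ 2 * l - 16 * al ^+ 2 + 2 * al * be * l ^+ 2 * m ^+ 2 + 6 * al * be * l * m ^+ 2 - 4 * al * be * l * m - 24 * al * be * m - 16 * al * be + 4 * al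 * l ^+ 2 * m ^+ 2 + 2 * al * l * m ^+ 2 - 28 * al * l * m - 8 * al * m + 48 * al + 2 * be ^+ 2 * l * m ^+ 3 + 4 * be ^+ 2 * l * m ^+ 2 - 8 * be ^+ 2 * m ^+ 2 - 16 * be ^+ 2 * m + 4 * be * l ^+ 2 * m ^+ 3 + 2 * be * l * m ^+ 3 - 28 * be * l * m ^+ 2 - 8 * be * m ^+ 2 + 48 * be * m) (- 2 * al * be * l ^+ 2 * m - 4 * al * be * l * m + 8 * al * be * l + 16 * al * be - 2 * be ^+ 2 * l * m ^+ 2 - 4 * be ^+ 2 * l * m + 8 * be ^+ 2 * m + 16 * be ^+ 2 - 4 * be * l ^+ 2 * m ^+ 2 - 2 * be * l * m ^+ 2 + 28 * be * l * m + 8 * be * m - 48 * be + l ^+ 2 * m ^+ 2 - 8 * l * m + 16).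
Definition Dl := 8 - 2 * al - 2 * be - 2 * (l * m) - (al * l + be * m).

Lemma Lt : (s1 al be l m * Wm) ^+ 2 = ((4 - l * m) ^+ 2)^-1 *: Tp.
Proof.
rewrite expr2 S1E /Wm /Tp !mk3_mul mk3_scale; apply: mk3_ext; field => //.
Qed.

Lemma LU2 : s2 al be l m * Tp * s2 al be l m = U2p.
Proof. rewrite S2E /Tp /U2p !mk3_mul; apply: mk3_ext; ring. Qed.
Lemma LU3 : s3 al be l m * Tp * s3 al be l m = U3p.
Proof. rewrite S3E /Tp /U3p !mk3_mul; apply: mk3_ext; ring. Qed.

Lemma comm_red (S : 'M[K]_3) :
  let t := s1 al be l m * Wm in
  t ^+ 2 * (S * t ^+ 2 * S) = (S * t ^+ 2 * S) * t ^+ 2 ->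
  Tp * (S * Tp * S) = (S * Tp * S) * Tp.
Proof.
move=> t; rewrite /t Lt.
rewrite -!scalerAr -[_ *: Tp * _]scalerAl -[_ *: (S * Tp) * S]scalerAl.
rewrite -!scalerAr -[_ *: (S * Tp * S) * Tp]scalerAl !scalerA.
apply: scalerI; rewrite mulf_neq0 // invr_eq0 expf_neq0 //.
Qed.

Lemma E200 : (Tp * U2p) 0 0 - (U2p * Tp) 0 0 =
  -4 * (Dl * (Dl - (4 - l * m)) * (4 - l * m) * (m + 2) * al * (al * l + 2 * be)).
Proof. rewrite /Tp /U2p /Dl !mk3_mul !mxE /=; ring. Qed.
Lemma E220 : (Tp * U2p) 2 0 - (U2p * Tp) 2 0 =
  4 * (Dl * (4 - l * m) * (m + 2) * al * ((m + 2) * (al * l + 2 * be) + l * m - 4)).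
Proof. rewrite /Tp /U2p /Dl !mk3_mul !mxE /=; ring. Qed.
Lemma E212 : m = -2 -> (Tp * U2p) 1 2 - (U2p * Tp) 1 2 =
  -2 * (Dl * (4 - l * m) ^+ 3 * (al * l + 2 * be)).
Proof. move=> m2; rewrite /Tp /U2p /Dl !mk3_mul !mxE /= m2; ring. Qed.
Lemma E300 : (Tp * U3p) 0 0 - (U3p * Tp) 0 0 =
  -4 * (Dl * (Dl - (4 - l * m)) * (4 - l * m) * (l + 2) * be * (be * m + 2 * al)).
Proof. rewrite /Tp /U3p /Dl !mk3_mul !mxE /=; ring. Qed.
Lemma E310 : (Tp * U3p) 1 0 - (U3p * Tp) 1 0 =
  4 * (Dl * (4 - l * m) * (l + 2) * be * ((l + 2) * (be * m + 2 * al) + l * m - 4)).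
Proof. rewrite /Tp /U3p /Dl !mk3_mul !mxE /=; ring. Qed.
Lemma E321 : l = -2 -> (Tp * U3p) 2 1 - (U3p * Tp) 2 1 =
  -2 * (Dl * (4 - l * m) ^+ 3 * (be * m + 2 * al)).
Proof. move=> l2; rewrite /Tp /U3p /Dl !mk3_mul !mxE /= l2; ring. Qed.
End Comm.


Section NoHalf.
Variable K : numClosedFieldType.
Variables (z : K) (N : nat).
Hypothesis NP : (0 < N)%N.
Hypothesis zN : z ^+ N = 1.

Local Notation pZK := (map_poly (intr : int -> K)).
Local Notation pZQ := (map_poly (intr : int -> rat)).
Local Notation pQK := (map_poly (ratr : rat -> K)).

Lemma pQK_pZQ (p : {poly int}) : pQK (pZQ p) = pZK p.
Proof. by rewrite -map_poly_comp; apply: eq_map_poly => x /=; rewrite ratr_int. Qed.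

Lemma no_half (f : {poly int}) : (pZK f).[z] * 2 != 1.
Proof.
apply/negP => /eqP hf.
pose P : {poly int} := 'X^N - 1.
pose F : {poly int} := f *+ 2 - 1.
have Pmon : P \is monic by rewrite /P -polyC1 monicXnsubC.
have rP : (pZK P).[z] = 0.
  by rewrite /P rmorphB /= map_polyXn rmorph1 hornerD hornerN hornerXn hornerC zN subrr.
have rF : (pZK F).[z] = 0.
  rewrite /F rmorphB rmorphMn /= rmorph1 hornerD hornerN hornerMn hornerC.
  by rewrite -mulr_natr hf subrr.
pose g := gcdp (pZQ P) (pZQ F).
have rg : (pQK g).[z] = 0.
  have [u hu] := Bezoutp (pZQ P) (pZQ F).
  case/eqpP: hu => [[c1 c2] /andP [c1n c2n] /= e].
  have := congr1 (fun p => (pQK p).[z]) e.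
  rewrite /= !map_polyZ !hornerZ rmorphD !rmorphM /= hornerD !hornerM !pQK_pZQ rP rF.
  rewrite !mulr0 addr0 mulr0 => /esym /eqP.
  by rewrite mulf_eq0 fmorph_eq0 (negbTE c2n) /= => /eqP.
have Pn0 : pZQ P != 0.
  by rewrite -size_poly_eq0 size_rat_int_poly size_poly_eq0 monic_neq0.
have sg : (1 < size g)%N.
  rewrite ltnNge; apply/negP => sg1.
  have gc := size1_polyC sg1.
  move: rg; rewrite gc map_polyC hornerC => /eqP; rewrite fmorph_eq0 => /eqP c0.
  move: gc; rewrite c0 => /eqP; rewrite polyC0 gcdp_eq0 (negbTE Pn0) //.
have [q0 [a an0 ge]] := rat_poly_scale g.
have helper (p : {poly int}) : g %| pZQ p -> (q0 %| p)%R.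
  case/dvdpP => s se.
  have [s0 [b bn0 se']] := rat_poly_scale s.
  apply/Pdiv.Idomain.dvdpP; exists ((b * a)%R, s0); first by rewrite /= mulf_neq0.
  apply: (@map_inj_poly _ _ (intr : int -> rat)); [exact: intr_inj | by [] |].
  rewrite /= map_polyZ rmorphM /= se se' ge -scalerAl -scalerAr scalerA.
  rewrite scalerA rmorphM /= [X in X *: _](_ : _ = 1) ?scale1r //.
  by field; rewrite !intr_eq0 an0 bn0.
have [r Pe] := dvdpP_int (helper _ (dvdp_gcdl _ _)).
have [r' Fe] := dvdpP_int (helper _ (dvdp_gcdr _ _)).
set h := zprimitive q0 in Pe Fe.
have sh : size h = size g.
  rewrite /h size_zprimitive ge size_scale ?size_rat_int_poly //.
  by rewrite invr_eq0 intr_eq0.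
have lh : lead_coef h * lead_coef r = 1.
  by rewrite -lead_coefM -Pe; apply/monicP.
have lphi : (intr : int -> 'F_2) (lead_coef h) != 0.
  apply/eqP => h0; have := congr1 (intr : int -> 'F_2) lh; rewrite rmorphM /= h0 mul0r rmorph1.
  by move/eqP; rewrite eq_sym oner_eq0.
have smh : size (map_poly (intr : int -> 'F_2) h) = size h := size_map_poly_id0 lphi.
have Fm : map_poly (intr : int -> 'F_2) F = -1.
  rewrite /F rmorphB rmorphMn /= rmorph1 -scaler_nat.
  have -> : (2%:R : 'F_2) = 0 by apply: (pchar_Fp_0 (isT : prime 2)).
  by rewrite scale0r sub0r.
have := congr1 (map_poly (intr : int -> 'F_2)) Fe; rewrite rmorphM /= Fm.
have [r0 | rn0] := eqVneq (map_poly (intr : int -> 'F_2) r') 0.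
  by rewrite r0 mulr0 => /eqP; rewrite oppr_eq0 oner_eq0.
have mhn0 : map_poly (intr : int -> 'F_2) h != 0.
  by rewrite -size_poly_eq0 smh sh -lt0n (ltn_trans _ sg).
move=> e0; have := congr1 (fun p : {poly 'F_2} => size p) e0; rewrite /= size_opp size_poly1 size_mul // smh sh.
have : (0 < size (map_poly (intr : int -> 'F_2) r'))%N by rewrite lt0n size_poly_eq0.
move: sg; case: (size (map_poly (intr : int -> 'F_2) r')) => // k sg _; rewrite addnS /= => e; have e2 : (size g + k = 1)%N by exact: (esym e). lia.
Qed.
End NoHalf.


Section Dio.
Variable K : numClosedFieldType.
Variables (z : K) (N : nat).
Hypothesis NP : (0 < N)%N.
Hypothesis zN : z ^+ N = 1.

Local Notation pZK := (map_poly (intr : int -> K)).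
Definition inZ (x : K) := exists f : {poly int}, x = (pZK f).[z].

Lemma inZD x y : inZ x -> inZ y -> inZ (x + y).
Proof. by case=> f -> [g ->]; exists (f + g); rewrite rmorphD hornerD. Qed.
Lemma inZM x y : inZ x -> inZ y -> inZ (x * y).
Proof. by case=> f -> [g ->]; exists (f * g); rewrite rmorphM hornerM. Qed.
Lemma inZN x : inZ x -> inZ (- x).
Proof. by case=> f ->; exists (- f); rewrite rmorphN hornerN. Qed.
Lemma inZB x y : inZ x -> inZ y -> inZ (x - y).
Proof. by move=> hx hy; apply: inZD => //; apply: inZN. Qed.
Lemma inZ_int (n : int) : inZ n%:~R.
Proof. by exists n%:P; rewrite map_polyC hornerC. Qed.
Lemma inZ_nat (n : nat) : inZ n%:R.
Proof. by have := inZ_int n; rewrite pmulrn. Qed.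
Lemma inZ1 : inZ 1. Proof. exact: (inZ_nat 1). Qed.
Lemma inZ0 : inZ 0. Proof. exact: (inZ_nat 0). Qed.
Lemma inZ_z : inZ z.
Proof. by exists 'X; rewrite map_polyX hornerX. Qed.
Lemma inZX x k : inZ x -> inZ (x ^+ k).
Proof. by move=> hx; elim: k => [|k IH]; [rewrite expr0; exact: inZ1 | rewrite exprS; exact: inZM]. Qed.
Lemma inZ_sum (n : nat) (F : nat -> K) : (forall i, inZ (F i)) -> inZ (\sum_(i < n) F i).
Proof. by move=> hF; elim/big_ind: _ => //; [exact: inZ0 | move=> x y; apply: inZD]. Qed.

Lemma no_half' : ~ inZ (2^-1).
Proof.
case=> f e; have := no_half NP zN f; rewrite -e mulVf ?eqxx //.
by rewrite pnatr_eq0.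
Qed.

Lemma odd_contra (O k : nat) x : odd O -> (0 < k)%N -> inZ x -> O%:R = 2 ^+ k * x -> False.
Proof.
move=> oO kp hx e.
case: k kp e => // k _ e.
have h2 : (2 : K) != 0 by rewrite pnatr_eq0.
have e1 : O%:R / 2 = 2 ^+ k * x by rewrite e exprS; field.
have hO : inZ (O%:R / 2) by rewrite e1; apply: inZM => //; apply: inZX; apply: (inZ_nat 2).
apply: no_half'.
have eO : (O%:R : K) = 2 * (O./2)%:R + 1.
  by rewrite -{1}(odd_double_half O) oO -muln2 natrD natrM /=; ring.
have -> : (2^-1 : K) = O%:R / 2 - (O./2)%:R by rewrite eO; field.
by apply: inZB => //; apply: inZ_nat.
Qed.

Lemma two_odd n : (0 < n)%N -> exists j o, odd o /\ n = (2 ^ j * o)%N.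
Proof.
elim/ltn_ind: n => n IH np.
case oN: (odd n); first by exists 0%N, n; rewrite expn0 mul1n.
have e := odd_double_half n; rewrite oN add0n -muln2 in e.
have h1 : (0 < n./2)%N by move: np; rewrite -e; case: (n./2).
have h2 : (n./2 < n)%N by rewrite -{2}e ltn_Pmulr.
have [j [o [oo ne]]] := IH _ h2 h1.
by exists j.+1, o; split => //; rewrite expnS -mulnA -ne mulnC e.
Qed.

Lemma sumgeom (x : K) n : (1 - x) * \sum_(i < n) x ^+ i = 1 - x ^+ n.
Proof.
have := subrX1 x n => e.
by rewrite -opprB mulNr -e opprB.
Qed.

Lemma dich (w : K) (n : nat) : (0 < n)%N -> w ^+ n = 1 -> w != 1 -> w != -1 -> inZ w ->
  (exists o Y, [/\ odd o, inZ Y & (1 - w) * Y = o%:R]) \/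
  (exists s, (0 < s)%N /\ w ^+ (2 ^ s) = -1).
Proof.
move=> np wn w1 wm1 hw.
have [j [o [oo ne]]] := two_odd np.
have vo : (w ^+ (2 ^ j)) ^+ o = 1 by rewrite -exprM -ne.
have [v1 | vn1] := eqVneq (w ^+ (2 ^ j)) 1.
  right.
  have ex : exists i, w ^+ (2 ^ i) == 1 by exists j; rewrite v1.
  case: (ex_minnP ex) => i hi hmin.
  case: i hi hmin => [|[|s]] hi hmin.
  - by rewrite expn0 expr1 (negbTE w1) in hi.
  - exfalso; move: hi; rewrite expn1 => /eqP h.
    have : (w - 1) * (w + 1) = 0 by rewrite mulrDr mulr1 mulrBl mul1r -expr2 h; ring.
    move/eqP; rewrite mulf_eq0 subr_eq0 (negbTE w1) /= addr_eq0 (negbTE wm1) //.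
  - exists s.+1; split => //.
    set x := w ^+ (2 ^ s.+1).
    have x2 : x ^+ 2 = 1 by rewrite /x -exprM -expnSr; apply/eqP.
    have xn1 : x != 1.
      by apply/negP => hx; have := hmin _ hx; rewrite ltnn.
    have : (x - 1) * (x + 1) = 0 by rewrite mulrDr mulr1 mulrBl mul1r -expr2 x2; ring.
    move/eqP; rewrite mulf_eq0 subr_eq0 (negbTE xn1) /= addr_eq0 => /eqP //.
left.
set v := w ^+ (2 ^ j) in vo vn1 *.
have hY : inZ ((\sum_(i < 2 ^ j) w ^+ i) * (\sum_(k < o) \sum_(i < k) v ^+ i)).
  apply: inZM; first by apply: (@inZ_sum _ (fun i => w ^+ i)) => i; apply: inZX.
  apply: (@inZ_sum _ (fun k => \sum_(i < k) v ^+ i)) => k.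
  by apply: (@inZ_sum _ (fun i => v ^+ i)) => i; apply: inZX; apply: inZX.
exists o, ((\sum_(i < 2 ^ j) w ^+ i) * (\sum_(k < o) \sum_(i < k) v ^+ i)).
split => //.
rewrite mulrA sumgeom mulr_sumr.
rewrite (eq_bigr (fun k : 'I_o => 1 - v ^+ k)); last by move=> k _; rewrite sumgeom.
rewrite sumrB sumr_const card_ord.
have -> : \sum_(k < o) v ^+ k = 0.
  have := sumgeom v o; rewrite vo subrr => /eqP.
  by rewrite mulf_eq0 subr_eq0 eq_sym (negbTE vn1) /= => /eqP.
by rewrite subr0.
Qed.


Lemma pow2_E (w : K) s : inZ w -> w ^+ (2 ^ s) = -1 ->
  exists E, inZ E /\ (1 - w) ^+ (2 ^ s) = 2 * E.
Proof.
move=> hw ws.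
have gen k : exists Y, inZ Y /\ (1 - w) ^+ (2 ^ k) = 1 + w ^+ (2 ^ k) + 2 * Y.
  elim: k => [|k [Y [hY e]]].
    by exists (- w); split; [apply: inZN | rewrite expn0 !expr1; ring].
  exists (w ^+ (2 ^ k) + 2 * Y * (1 + w ^+ (2 ^ k)) + 2 * Y ^+ 2); split.
    have h2 : inZ 2 := inZ_nat 2.
    apply: inZD; [apply: inZD|]; [apply: inZX => //| |].
      by apply: inZM; [apply: inZM|apply: inZD; [apply: inZ1|apply: inZX]].
    by apply: inZM => //; apply: inZX.
  rewrite expnSr exprM e exprM; ring.
have [Y [hY e]] := gen s.
by exists Y; split => //; rewrite e ws; ring.
Qed.

Lemma pow2_U (w : K) s : inZ w -> w ^+ (2 ^ s) = -1 ->
  exists U, inZ U /\ 2 = (1 - w) ^+ (2 ^ s) * U.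
Proof.
elim: s w => [|s IH] w hw ws.
  rewrite expn0 expr1 in ws.
  by exists 1; split; [apply: inZ1 | rewrite expn0 expr1 ws; ring].
have vs : (w ^+ 2) ^+ (2 ^ s) = -1 by rewrite -exprM -expnS.
have [U [hU e]] := IH _ (inZX 2 hw) vs.
pose T := \sum_(i < (2 ^ s.+1).+1) w ^+ i.
have hT : inZ T by apply: (@inZ_sum _ (fun i => w ^+ i)) => i; apply: inZX.
have e1 : 1 + w = (1 - w) * T by rewrite sumgeom exprS ws; ring.
have e2 : 1 - w ^+ 2 = (1 - w) ^+ 2 * T.
  by rewrite (_ : 1 - w ^+ 2 = (1 - w) * (1 + w)); [rewrite e1; ring | ring].
exists (T ^+ (2 ^ s) * U); split; first by apply: inZM => //; apply: inZX.
by rewrite e e2 exprMn expnS exprM mulrA.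
Qed.


Lemma two_neq0 : (2 : K) != 0.
Proof. by rewrite pnatr_eq0. Qed.

Lemma mixed_contra (w w' X Y : K) (o s : nat) : inZ w' -> inZ X -> inZ Y -> odd o -> (0 < s)%N ->
  (1 - w) * Y = o%:R -> w' ^+ (2 ^ s) = -1 ->
  (1 - w) ^+ 2 * (1 - w') ^+ 2 = 2 ^+ 2 * X -> False.
Proof.
move=> hw' hX hY oo sp eY ws key.
have [U [hU eU]] := pow2_U hw' ws.
case: s sp ws eU => // t _ ws eU.
have key' : (1 - w) ^+ (2 ^ t.+1) * (1 - w') ^+ (2 ^ t.+1) = 2 ^+ (2 ^ t.+1) * X ^+ (2 ^ t).
  by rewrite expnS !exprM -exprMn key exprMn.
have Mp : (0 < 2 ^ t.+1)%N by rewrite expn_gt0.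
have h : 2 * (o ^ (2 ^ t.+1))%:R = (1 - w) ^+ (2 ^ t.+1) * (1 - w') ^+ (2 ^ t.+1) * (Y ^+ (2 ^ t.+1) * U).
  rewrite natrX -eY {1}eU exprMn.
  set p1 := (1 - w') ^+ _; set p2 := (1 - w) ^+ _; set p3 := Y ^+ _; ring.
rewrite key' in h.
apply: (@odd_contra (o ^ (2 ^ t.+1)) (2 ^ t.+1).-1 (X ^+ (2 ^ t) * (Y ^+ (2 ^ t.+1) * U))).
- by rewrite oddX oo orbT.
- have p : (0 < 2 ^ t)%N by rewrite expn_gt0.
  by rewrite expnS; lia.
- by apply: inZM; [apply: inZX | apply: inZM => //; apply: inZX].
have e : (2 : K) ^+ (2 ^ t.+1) = 2 * 2 ^+ (2 ^ t.+1).-1.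
  by rewrite -exprS (prednK Mp).
by apply: (mulfI two_neq0); rewrite h e !mulrA.
Qed.

Lemma both_pow (w1 w3 X : K) (s1 s3 : nat) : inZ w1 -> inZ w3 -> inZ X ->
  (0 < s1)%N -> (0 < s3)%N -> w1 ^+ (2 ^ s1) = -1 -> w3 ^+ (2 ^ s3) = -1 ->
  (1 - w1) ^+ 2 * (1 - w3) ^+ 2 = 2 ^+ 2 * X -> s1 = 1%N /\ s3 = 1%N.
Proof.
move=> hw1 hw3 hX s1p s3p ws1 ws3 key.
have [U1 [hU1 eU1]] := pow2_U hw1 ws1.
have [U3 [hU3 eU3]] := pow2_U hw3 ws3.
set A := (2 ^ s1)%N in ws1 eU1 *.
set B := (2 ^ s3)%N in ws3 eU3 *.
have eAB : (A * B = 2 * 2 ^ (s1 + s3).-1)%N.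
  by rewrite -expnS prednK ?addn_gt0 ?s1p // expnD.
have key' : (1 - w1) ^+ (A * B) * (1 - w3) ^+ (A * B) = 2 ^+ (A * B) * X ^+ (2 ^ (s1 + s3).-1).
  by rewrite eAB !exprM -exprMn key exprMn.
have e2B : (2 : K) ^+ B = (1 - w1) ^+ (A * B) * U1 ^+ B by rewrite {1}eU1 exprMn -exprM.
have e2A : (2 : K) ^+ A = (1 - w3) ^+ (A * B) * U3 ^+ A by rewrite {1}eU3 exprMn mulnC -exprM.
have h : (2 : K) ^+ (A + B) = 2 ^+ (A * B) * (X ^+ (2 ^ (s1 + s3).-1) * U1 ^+ B * U3 ^+ A).
  rewrite exprD e2A e2B.
  move: key'; set p1 := (1 - w1) ^+ _; set p2 := (1 - w3) ^+ _; set p3 := U1 ^+ _.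
  set p4 := U3 ^+ _; set p5 := X ^+ _; set q := (2 : K) ^+ _ => key'.
  have -> : p2 * p4 * (p1 * p3) = (p1 * p2) * (p3 * p4) by ring.
  rewrite key'; ring.
have hA : (2 <= A)%N by rewrite /A; case: (s1) s1p => // t _; rewrite expnS leq_pmulr // expn_gt0.
have hB : (2 <= B)%N by rewrite /B; case: (s3) s3p => // t _; rewrite expnS leq_pmulr // expn_gt0.
case: (boolP ((s1 == 1%N) && (s3 == 1%N))) => [/andP [/eqP -> /eqP ->] // | nn].
exfalso.
have hAB : (A + B < A * B)%N.
  have h4 : (4 <= A)%N || (4 <= B)%N.
    move: nn; rewrite /A /B.
    case: (s1) s1p => [//|[|t1]] _; case: (s3) s3p => [//|[|t3]] _ //=;
      rewrite ?expnS ?mulnA //= ?leq_pmulr ?expn_gt0 //.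
  case/orP: h4 => h4; nia.
apply: (@odd_contra 1 (A * B - (A + B)) (X ^+ (2 ^ (s1 + s3).-1) * U1 ^+ B * U3 ^+ A)) => //.
- by rewrite subn_gt0.
- by apply: inZM; [apply: inZM|]; apply: inZX.
apply: (@mulfI _ (2 ^+ (A + B))); first by rewrite expf_neq0 // two_neq0.
by rewrite [RHS]mulrA -exprD (subnKC (ltnW hAB)) mulr1 h.
Qed.

Lemma dio (z1 z3 b : K) (n1 n3 : nat) : (0 < n1)%N -> (0 < n3)%N ->
  z1 ^+ n1 = 1 -> z3 ^+ n3 = 1 -> z1 != 1 -> z1 != -1 -> z3 != 1 -> z3 != -1 ->
  inZ z1 -> inZ z3 -> inZ b ->
  (2 + z1 + z1^-1) * (2 + z3 + z3^-1) = 4 * b -> z1 ^+ 2 = -1 /\ z3 ^+ 2 = -1.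
Proof.
move=> n1p n3p e1 e3 z11 z1m z31 z3m h1 h3 hb eq.
have zn0 (x : K) n : (0 < n)%N -> x ^+ n = 1 -> x != 0.
  move=> np xn; apply/eqP => x0; move: xn; rewrite x0 expr0n eqn0Ngt np /=.
  by move/eqP; rewrite eq_sym oner_eq0.
have z1n := zn0 _ _ n1p e1.
have z3n := zn0 _ _ n3p e3.
have key : (1 - (- z1)) ^+ 2 * (1 - (- z3)) ^+ 2 = 2 ^+ 2 * (z1 * z3 * b).
  have -> : (1 - - z1) ^+ 2 = z1 * (2 + z1 + z1^-1) by field.
  have -> : (1 - - z3) ^+ 2 = z3 * (2 + z3 + z3^-1) by field.
  have -> : (2 : K) ^+ 2 = 4 by rewrite expr2 -natrM.
  by rewrite mulrACA eq; ring.
have hX : inZ (z1 * z3 * b) by apply: inZM => //; apply: inZM.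
have wn (x : K) n : x ^+ n = 1 -> (- x) ^+ (n * 2) = 1.
  by move=> xn; rewrite mulnC exprM sqrrN -exprM mulnC exprM xn expr1n.
have w1 (x : K) : x != -1 -> - x != 1 by move=> h; rewrite eqr_oppLR.
have wm1 (x : K) : x != 1 -> - x != -1 by move=> h; rewrite eqr_opp.
have np2 n : (0 < n)%N -> (0 < n * 2)%N by move=> np; rewrite muln_gt0 np.
have d1 := dich (np2 _ n1p) (wn _ _ e1) (w1 _ z1m) (wm1 _ z11) (inZN h1).
have d3 := dich (np2 _ n3p) (wn _ _ e3) (w1 _ z3m) (wm1 _ z31) (inZN h3).
case: d1 => [[o1 [Y1 [oo1 hY1 eY1]]] | [s1 [s1p ws1]]];
case: d3 => [[o3 [Y3 [oo3 hY3 eY3]]] | [s3 [s3p ws3]]].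
- exfalso.
  apply: (@odd_contra ((o1 * o3) ^ 2) 2 (z1 * z3 * b * (Y1 * Y3) ^+ 2)) => //.
  + by rewrite oddX oddM oo1 oo3.
  + by apply: inZM => //; apply: inZX; apply: inZM.
  by rewrite natrX natrM -eY1 -eY3 mulrA -key; ring.
- exfalso; exact: (mixed_contra (inZN h3) hX hY1 oo1 s3p eY1 ws3 key).
- exfalso; apply: (mixed_contra (inZN h1) hX hY3 oo3 s1p eY3 ws1).
  by rewrite mulrC key.
have [e1' e3'] := both_pow (inZN h1) (inZN h3) hX s1p s3p ws1 ws3 key.
by rewrite e1' e3' expn1 !sqrrN in ws1 ws3.
Qed.

End Dio.


Definition o0 : 'I_3 := @Ordinal 3 0 isT.
Definition o1 : 'I_3 := @Ordinal 3 1 isT.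
Definition o2 : 'I_3 := @Ordinal 3 2 isT.

Definition fA (x : 'I_3 * bool) : 'I_3 * bool :=
  match nat_of_ord x.1 with 0 => (o2, ~~ x.2) | 1 => (o1, x.2) | _ => (o0, ~~ x.2) end.
Definition fB (x : 'I_3 * bool) : 'I_3 * bool :=
  match nat_of_ord x.1 with 0 => (o0, x.2) | 1 => (o1, x.2) | _ => (o2, ~~ x.2) end.
Definition fC (x : 'I_3 * bool) : 'I_3 * bool :=
  match nat_of_ord x.1 with 0 => (o0, x.2) | 1 => (o2, x.2) | _ => (o1, x.2) end.

Ltac pcase := let i := fresh in let H := fresh in let b := fresh in
  case=> [[[|[|[|i]]] H] [|]] //.

Lemma fA_inv : involutive fA. Proof. by pcase; apply/eqP. Qed.
Lemma fB_inv : involutive fB. Proof. by pcase; apply/eqP. Qed.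
Lemma fC_inv : involutive fC. Proof. by pcase; apply/eqP. Qed.

Definition pA : {perm 'I_3 * bool} := perm (inv_inj fA_inv).
Definition pB : {perm 'I_3 * bool} := perm (inv_inj fB_inv).
Definition pC : {perm 'I_3 * bool} := perm (inv_inj fC_inv).

Lemma pAE x : pA x = fA x. Proof. by rewrite permE. Qed.
Lemma pBE x : pB x = fB x. Proof. by rewrite permE. Qed.
Lemma pCE x : pC x = fC x. Proof. by rewrite permE. Qed.

Lemma inWB3 (g : {perm 'I_3 * bool}) : g \in WB3 -> forall x, g (flip3 x) = flip3 (g x).
Proof. by rewrite inE => /forallP h x; apply/eqP. Qed.

Lemma WB3P (g : {perm 'I_3 * bool}) : (forall x, g (flip3 x) = flip3 (g x)) -> g \in WB3.
Proof. by move=> h; rewrite inE; apply/forallP => x; apply/eqP. Qed.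

Lemma WB3M g h : g \in WB3 -> h \in WB3 -> (g * h)%g \in WB3.
Proof. by move=> /inWB3 hg /inWB3 hh; apply: WB3P => x; rewrite !permM hg hh. Qed.

Lemma WB3V g : g \in WB3 -> (g^-1)%g \in WB3.
Proof.
move=> /inWB3 hg; apply: WB3P => x.
by apply: (@perm_inj _ g); rewrite hg !permKV.
Qed.

Lemma pA_WB3 : pA \in WB3. Proof. by apply: WB3P; rewrite /flip3; pcase; rewrite !pAE. Qed.
Lemma pB_WB3 : pB \in WB3. Proof. by apply: WB3P; rewrite /flip3; pcase; rewrite !pBE. Qed.
Lemma pC_WB3 : pC \in WB3. Proof. by apply: WB3P; rewrite /flip3; pcase; rewrite !pCE. Qed.

Lemma red (g h : {perm 'I_3 * bool}) : g \in WB3 -> h \in WB3 ->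
  g (o0, false) = h (o0, false) -> g (o1, false) = h (o1, false) -> g (o2, false) = h (o2, false) ->
  g = h.
Proof.
move=> /inWB3 hg /inWB3 hh e0 e1 e2.
have ef (i : 'I_3) : g (i, false) = h (i, false).
  case: i => [[|[|[|i]]] Hi] //.
  - by rewrite (_ : Ordinal Hi = o0) //; apply: val_inj.
  - by rewrite (_ : Ordinal Hi = o1) //; apply: val_inj.
  - by rewrite (_ : Ordinal Hi = o2) //; apply: val_inj.
apply/permP => -[i [|]]; last exact: ef.
by rewrite -[(i, true)]/(flip3 (i, false)) hg hh ef.
Qed.

Lemma six (P : 'I_3 * bool -> Prop) :
  P (o0, false) -> P (o0, true) -> P (o1, false) -> P (o1, true) -> P (o2, false) -> P (o2, true) ->
  forall y, P y.
Proof.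
move=> h1 h2 h3 h4 h5 h6; case=> [[[|[|[|i]]] Hi] [|]] //;
  first [ rewrite (_ : Ordinal Hi = o0); [done|by apply: val_inj]
        | rewrite (_ : Ordinal Hi = o1); [done|by apply: val_inj]
        | rewrite (_ : Ordinal Hi = o2); [done|by apply: val_inj] ].
Qed.

Section Gen.
Variable H : {perm 'I_3 * bool} -> Prop.
Hypothesis HM : forall x y, H x -> H y -> H (x * y)%g.
Hypothesis H1 : H 1%g.
Hypotheses (HA : H pA) (HB : H pB) (HC : H pC).

Lemma via g h : H h -> H (g * h^-1)%g -> H g.
Proof. by move=> hh hg; rewrite -(mulgKV h g); apply: HM. Qed.

Lemma stepv (g h : {perm 'I_3 * bool}) x x' y : g x = y -> h x' = y -> (g * h^-1)%g x = x'.
Proof. by move=> e e'; rewrite permM e -e' permK. Qed.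

Lemma clash (g : {perm 'I_3 * bool}) x x' y : g \in WB3 -> g x = y -> g x' = y -> x = x'.
Proof. by move=> _ e e'; apply: (@perm_inj _ g); rewrite e e'. Qed.

Lemma clash' (g : {perm 'I_3 * bool}) x x' y : g \in WB3 -> g x = y -> g x' = flip3 y -> flip3 x = x'.
Proof. by move=> /inWB3 hg e e'; apply: (@perm_inj _ g); rewrite hg e e'. Qed.

Ltac vals := rewrite ?permM ?pAE ?pBE ?pCE /=.

Lemma claim3 g : g \in WB3 -> g (o0, false) = (o0, false) -> g (o1, false) = (o1, false) -> H g.
Proof.
move=> gW e0 e1.
have := @six (fun y => g (o2, false) = y -> H g); apply => // e.
- by have := clash gW e e0.
- by have := clash' gW e0 e.
- by have := clash gW e e1.
- by have := clash' gW e1 e.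
- by rewrite (@red g 1%g) //; [apply: WB3P => x; rewrite !perm1 | rewrite perm1 | rewrite perm1 | rewrite perm1].
- by rewrite (@red g pB) //; [apply: pB_WB3 | vals | vals | vals].
Qed.

Lemma claim2 g : g \in WB3 -> g (o0, false) = (o0, false) -> H g.
Proof.
move=> gW e0.
have := @six (fun y => g (o1, false) = y -> H g); apply => // e.
- by have := clash gW e e0.
- by have := clash' gW e0 e.
- exact: claim3.
- apply: (@via g (pC * pB * pC)%g); first by apply: HM => //; apply: HM.
  apply: claim3; first by apply: WB3M => //; apply: WB3V; apply: WB3M; [apply: WB3M|]; 
    [apply: pC_WB3|apply: pB_WB3|apply: pC_WB3].
  + by apply: (stepv e0); vals.
  + by apply: (stepv e); vals.
- apply: (@via g pC) => //.
  apply: claim3; first by apply: WB3M => //; apply: WB3V; apply: pC_WB3.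
  + by apply: (stepv e0); vals.
  + by apply: (stepv e); vals.
- apply: (@via g (pC * pB)%g); first by apply: HM.
  apply: claim3; first by apply: WB3M => //; apply: WB3V; apply: WB3M; [apply: pC_WB3|apply: pB_WB3].
  + by apply: (stepv e0); vals.
  + by apply: (stepv e); vals.
Qed.

Lemma gen g : g \in WB3 -> H g.
Proof.
move=> gW.
have := @six (fun y => g (o0, false) = y -> H g); apply => // e.
- exact: claim2.
- apply: (@via g (pA * pB * pA)%g); first by apply: HM => //; apply: HM.
  apply: claim2; first by apply: WB3M => //; apply: WB3V; apply: WB3M; [apply: WB3M|];
    [apply: pA_WB3|apply: pB_WB3|apply: pA_WB3].
  by apply: (stepv e); vals.
- apply: (@via g (pA * pB * pC)%g); first by apply: HM => //; apply: HM.
  apply: claim2; first by apply: WB3M => //; apply: WB3V; apply: WB3M; [apply: WB3M|];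
    [apply: pA_WB3|apply: pB_WB3|apply: pC_WB3].
  by apply: (stepv e); vals.
- apply: (@via g (pA * pC)%g); first by apply: HM.
  apply: claim2; first by apply: WB3M => //; apply: WB3V; apply: WB3M; [apply: pA_WB3|apply: pC_WB3].
  by apply: (stepv e); vals.
- apply: (@via g (pA * pB)%g); first by apply: HM.
  apply: claim2; first by apply: WB3M => //; apply: WB3V; apply: WB3M; [apply: pA_WB3|apply: pB_WB3].
  by apply: (stepv e); vals.
- apply: (@via g pA) => //.
  apply: claim2; first by apply: WB3M => //; apply: WB3V; apply: pA_WB3.
  by apply: (stepv e); vals.
Qed.
End Gen.


Section Isom.
Variable K : numClosedFieldType.
Variables al be l m : K.
Variable u0 : 'I_3 -> 'rV[K]_3.
Definition uu (x : 'I_3 * bool) : 'rV[K]_3 := (if x.2 then -1 else 1) *: u0 x.1.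
Variable Uinv : 'M[K]_3.
Hypothesis HU : Uinv *m (\matrix_(i, j) u0 i 0 j) = 1%:M.
Variable P : 'I_3 -> {perm 'I_3 * bool}.
Hypothesis HP : forall k x, uu x *m reflR al be l m k = uu (P k x).
Hypothesis Hgen : forall H : {perm 'I_3 * bool} -> Prop,
  (forall x y, H x -> H y -> H (x * y)%g) -> H 1%g -> (forall k, H (P k)) ->
  forall g, g \in WB3 -> H g.

Definition fiso (x : 'M[K]_3) : {perm 'I_3 * bool} :=
  odflt 1%g [pick s : {perm 'I_3 * bool} | [forall j, uu j *m x == uu (s j)]].

Let Umat := \matrix_(i, j) u0 i 0 j.

Lemma uuU x : uu x *m Uinv = (if x.2 then -1 else 1) *: delta_mx 0 x.1.
Proof.
have e : Umat *m Uinv = 1%:M by apply: mulmx1C.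
rewrite /uu -scalemxAl; congr (_ *: _).
have -> : u0 x.1 = row x.1 Umat by apply/rowP => j; rewrite !mxE.
by rewrite -row_mul e row1.
Qed.

Lemma sgn_neq0 (b : bool) : (if b then -1 else 1 : K) != 0.
Proof. by case: b; rewrite ?oppr_eq0 oner_eq0. Qed.

Lemma uu_inj : injective uu.
Proof.
move=> [i s] [i' s'] e.
have := congr1 (fun v => (v *m Uinv) 0 i) e; rewrite !uuU /= !mxE /=.
rewrite eqxx mulr1.
case: (eqVneq i i') => [<- | ne]; last first.
  by rewrite mulr0 => /eqP; rewrite (negbTE (sgn_neq0 s)).
rewrite mulr1; clear e; case: s; case: s' => //= /eqP.
- by rewrite -subr_eq0 -opprD oppr_eq0 -mulr2n pnatr_eq0.
- by rewrite eq_sym -subr_eq0 -opprD oppr_eq0 -mulr2n pnatr_eq0.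
Qed.

Lemma uu_flip y : uu (flip3 y) = - uu y.
Proof. by case: y => i [|]; rewrite /uu /flip3 /= ?scaleN1r ?scale1r ?opprK. Qed.

Lemma fiso_spec x : (exists s : {perm 'I_3 * bool}, forall j, uu j *m x = uu (s j)) ->
  forall j, uu j *m x = uu (fiso x j).
Proof.
rewrite /fiso; case: pickP => [s /forallP h | none] /=.
  by move=> _ j; apply/eqP.
case=> s hs; have := none s; rewrite (_ : [forall j, _] = true) //.
by apply/forallP => j; apply/eqP.
Qed.

Lemma fiso_uniq x (s : {perm 'I_3 * bool}) : (forall j, uu j *m x = uu (s j)) -> fiso x = s.
Proof.
move=> hs; have h := fiso_spec (ex_intro _ s hs).
by apply/permP => j; apply: uu_inj; rewrite -h hs.
Qed.

Lemma inG_mul x y : inG al be l m x -> inG al be l m y -> inG al be l m (x * y).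
Proof.
elim => [|i x' _ IH] hy; first by rewrite mul1r.
by rewrite -mulrA; apply: inGmul; apply: IH.
Qed.

Lemma G_spec x : inG al be l m x -> exists s : {perm 'I_3 * bool}, forall j, uu j *m x = uu (s j).
Proof.
elim => [|i x' _ [s hs]]; first by exists 1%g => j; rewrite perm1 mulmx1.
exists (P i * s)%g => j.
by rewrite [reflR _ _ _ _ _ * _]/(_ *m _) mulmxA HP hs permM.
Qed.

Theorem iso : isom_WB3 (inG al be l m).
Proof.
have hom x y : inG al be l m x -> inG al be l m y -> fiso (x * y) = (fiso x * fiso y)%g.
  move=> hx hy; apply: fiso_uniq => j.
  by rewrite [x * y]/(x *m y) mulmxA (fiso_spec (G_spec hx)) (fiso_spec (G_spec hy)) permM.
exists fiso; split.
- exact: hom.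
- move=> x y hx hy e.
  have ej j : uu j *m x = uu j *m y.
    by rewrite (fiso_spec (G_spec hx)) (fiso_spec (G_spec hy)) e.
  have eU : Umat *m x = Umat *m y.
    apply/row_matrixP => i; rewrite !row_mul.
    have -> : row i Umat = uu (i, false) by apply/rowP => j; rewrite /uu /= scale1r !mxE.
    exact: ej.
  by rewrite -(mul1mx x) -(mul1mx y) -HU -!mulmxA eU.
- move=> g; split.
  + move=> gW; apply: (@Hgen (fun g => exists2 x : 'M[K]_3, inG al be l m x & fiso x = g) _ _ _ g gW).
    * move=> _ _ [x hx <-] [y hy <-]; exists (x * y); first exact: inG_mul.
      exact: hom.
    * exists 1; first exact: inG1.
      by apply: fiso_uniq => j; rewrite perm1 [1]/(1%:M) mulmx1.
    * move=> k; exists (reflR al be l m k * 1); first by apply: inGmul; apply: inG1.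
      by apply: fiso_uniq => j; rewrite mulr1 HP.
  + case=> x hx <-; rewrite inE; apply/forallP => j; apply/eqP; apply: uu_inj.
    by rewrite -(fiso_spec (G_spec hx)) !uu_flip mulNmx (fiso_spec (G_spec hx)).
Qed.
End Isom.


Section Inst.
Variable K : numClosedFieldType.

Definition mkrow (a b c : K) : 'rV[K]_3 := \row_(j < 3) nth 0 [:: a; b; c] j.

Definition u1 (i : 'I_3) : 'rV[K]_3 :=
  match nat_of_ord i with 0 => mkrow 1 0 0 | 1 => mkrow 0 0 1 | _ => mkrow 1 (-2) (-1) end.
Definition P1 (k : 'I_3) : {perm 'I_3 * bool} :=
  match nat_of_ord k with 0 => pA | 1 => pB | _ => pC end.

Lemma two_neq0K : (2 : K) != 0. Proof. by rewrite pnatr_eq0. Qed.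

Lemma HU1 : mk3 1 0 0 (1/2) (-1/2) (-1/2) 0 1 0 *m (\matrix_(i, j) u1 i 0 j) = 1%:M.
Proof.
have h2 := two_neq0K.
apply/matrixP => i j; rewrite !mxE !big_ord_recr big_ord0 /= !mxE /=.
by case: i => [[|[|[|i]]] Hi] //; case: j => [[|[|[|j]]] Hj] //=; field.
Qed.

Lemma HP1 k x : uu u1 x *m reflR 2 1 (-1) (-2) k = uu u1 (P1 k x).
Proof.
apply/rowP => j; rewrite !mxE !big_ord_recr big_ord0 /= !mxE /=.
case: k => [[|[|[|k]]] Hk] //; case: x => [[[|[|[|i]]] Hi] [|]] //;
  rewrite /P1 /= ?pAE ?pBE ?pCE /= !mxE /=;
  case: j => [[|[|[|j]]] Hj] //=; ring.
Qed.

Lemma isoB3_1 : isom_WB3 (inG (2 : K) 1 (-1) (-2)).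
Proof.
apply: (@iso K 2 1 (-1) (-2) u1 _ HU1 P1 HP1).
move=> H HM H1 hk g gW; apply: (gen HM H1 (hk 0) (hk 1) (hk 2) gW).
Qed.

Definition u2 (i : 'I_3) : 'rV[K]_3 :=
  match nat_of_ord i with 0 => mkrow 1 0 0 | 1 => mkrow 0 1 0 | _ => mkrow 1 (-1) (-2) end.
Definition P2 (k : 'I_3) : {perm 'I_3 * bool} :=
  match nat_of_ord k with 0 => pA | 1 => pC | _ => pB end.

Lemma HU2 : mk3 1 0 0 0 1 0 (1/2) (-1/2) (-1/2) *m (\matrix_(i, j) u2 i 0 j) = 1%:M.
Proof.
have h2 := two_neq0K.
apply/matrixP => i j; rewrite !mxE !big_ord_recr big_ord0 /= !mxE /=.
by case: i => [[|[|[|i]]] Hi] //; case: j => [[|[|[|j]]] Hj] //=; field.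
Qed.

Lemma HP2 k x : uu u2 x *m reflR 1 2 (-2) (-1) k = uu u2 (P2 k x).
Proof.
apply/rowP => j; rewrite !mxE !big_ord_recr big_ord0 /= !mxE /=.
case: k => [[|[|[|k]]] Hk] //; case: x => [[[|[|[|i]]] Hi] [|]] //;
  rewrite /P2 /= ?pAE ?pBE ?pCE /= !mxE /=;
  case: j => [[|[|[|j]]] Hj] //=; ring.
Qed.

Lemma isoB3_2 : isom_WB3 (inG (1 : K) 2 (-2) (-1)).
Proof.
apply: (@iso K 1 2 (-2) (-1) u2 _ HU2 P2 HP2).
move=> H HM H1 hk g gW; apply: (gen HM H1 (hk 0) (hk 2) (hk 1) gW).
Qed.
End Inst.


Lemma prim_exists (K : numClosedFieldType) n : (0 < n)%N -> exists z : K, n.-primitive_root z.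
Proof.
pose p : {poly K} := 'X^n - 1; have [r Dp] := closed_field_poly_normal p.
move=> n_gt0; rewrite (monicP _) ?monicXnsubC // scale1r in Dp.
have rn1: all n.-unity_root r by apply/allP=> z; rewrite -root_prod_XsubC -Dp.
have sz_r: (n < (size r).+1)%N.
  by rewrite -(size_prod_XsubC r id) -Dp size_XnsubC.
have [|z] := hasP (has_prim_root n_gt0 rn1 _ sz_r); last by exists z.
by rewrite -separable_prod_XsubC -Dp separable_Xn_sub_1 // pnatr_eq0 -lt0n.
Qed.


Section Main.
Variable K : numClosedFieldType.

Lemma prim_ne (p : nat) (z : K) : (3 <= p)%N -> p.-primitive_root z ->
  [/\ z != 0, z != 1 & z != -1].
Proof.
move=> p3 pz; split.
- apply/eqP => z0; move: (prim_expr_order pz); rewrite z0 expr0n.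
  have -> : (p == 0)%N = false by case: p p3 pz.
  by move/eqP; rewrite eq_sym oner_eq0.
- apply/eqP => z1; have := prim_order_dvd pz 1; rewrite z1 expr1 eqxx.
  by rewrite dvdn1 => /eqP p1; move: p3; rewrite p1.
- apply/eqP => zm; have := prim_order_dvd pz 2; rewrite zm sqrrN expr1n eqxx.
  by move/(dvdn_leq (isT : (0 < 2)%N)) => h; move: (leq_trans p3 h).
Qed.

Lemma fc_neq0 (z : K) : z != 0 -> z != -1 -> fourcos2 z != 0.
Proof.
move=> zn zm; rewrite /fourcos2.
have -> : 2 + z + z^-1 = z^-1 * (z + 1) ^+ 2 by field.
rewrite mulf_neq0 ?invr_eq0 // expf_neq0 //.
by apply: contra zm; rewrite addr_eq0.
Qed.

Lemma fc_m1 (z : K) : z ^+ 2 = -1 -> fourcos2 z = 2.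
Proof.
move=> h; have zn : z != 0 by apply/eqP => z0; move: h; rewrite z0 expr0n /= => /eqP; rewrite eq_sym oppr_eq0 oner_eq0.
rewrite /fourcos2.
have -> : z^-1 = - z by apply: (mulfI zn); rewrite mulfV // mulrN -expr2 h opprK.
by rewrite addrK.
Qed.

Lemma dio_main (p q r : nat) (z1 z2 z3 : K) : (3 <= p)%N -> (3 <= q)%N -> (3 <= r)%N ->
  p.-primitive_root z1 -> q.-primitive_root z2 -> r.-primitive_root z3 ->
  fourcos2 z1 * fourcos2 z3 = 4 * fourcos2 z2 -> z1 ^+ 2 = -1 /\ z3 ^+ 2 = -1.
Proof.
move=> p3 q3 r3 pz1 pz2 pz3 eq.
have Np : (0 < p * q * r)%N by rewrite !muln_gt0; apply/andP; split; [apply/andP; split|]; lia.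
have [zeta pzeta] := prim_exists K Np.
have zN : zeta ^+ (p * q * r) = 1 := prim_expr_order pzeta.
have inz (x : K) n : (n %| p * q * r)%N -> x ^+ n = 1 -> inZ zeta x.
  move=> dn xn; have xN : x ^+ (p * q * r) = 1.
    by rewrite -(divnK dn) mulnC exprM xn expr1n.
  have [i ->] := prim_rootP pzeta xN.
  by apply: inZX; apply: inZ_z.
have d1 : (p %| p * q * r)%N by rewrite -mulnA dvdn_mulr.
have d2 : (q %| p * q * r)%N by rewrite mulnAC dvdn_mull // dvdn_mulr.
have d3 : (r %| p * q * r)%N by rewrite dvdn_mull.
have [z1n z11 z1m] := prim_ne p3 pz1.
have [z2n z21 z2m] := prim_ne q3 pz2.
have [z3n z31 z3m] := prim_ne r3 pz3.
have h1 := inz _ _ d1 (prim_expr_order pz1).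
have h2 := inz _ _ d2 (prim_expr_order pz2).
have h3 := inz _ _ d3 (prim_expr_order pz3).
have hb : inZ zeta (fourcos2 z2).
  rewrite /fourcos2.
  have -> : z2^-1 = z2 ^+ q.-1.
    apply: (mulfI z2n); rewrite mulfV // -exprS prednK ?(prim_expr_order pz2) //.
    by apply: (prim_order_gt0 pz2).
  by apply: inZD; [apply: inZD; [apply: (inZ_nat _ 2)|]|apply: inZX].
exact: (dio Np zN (prim_order_gt0 pz1) (prim_order_gt0 pz3) (prim_expr_order pz1)
  (prim_expr_order pz3) z11 z1m z31 z3m h1 h3 hb eq).
Qed.

Lemma c4 (x : K) : -4 * x = 0 -> x = 0.
Proof. by move/eqP; rewrite mulf_eq0 oppr_eq0 pnatr_eq0 /= => /eqP. Qed.
Lemma c4' (x : K) : 4 * x = 0 -> x = 0.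
Proof. by move/eqP; rewrite mulf_eq0 pnatr_eq0 /= => /eqP. Qed.
Lemma c2 (x : K) : -2 * x = 0 -> x = 0.
Proof. by move/eqP; rewrite mulf_eq0 oppr_eq0 pnatr_eq0 /= => /eqP. Qed.

End Main.

Unset Implicit Arguments.
Theorem proposition11 (K : numClosedFieldType) (p q r r1 : nat)
  (z1 z2 z3 l m : K) :
  (3 <= p)%N -> (3 <= q)%N -> (3 <= r)%N ->
  p.-primitive_root z1 -> q.-primitive_root z2 -> r.-primitive_root z3 ->
  l * m = fourcos2 z3 ->
  r = (2 * r1)%N ->
  let al := fourcos2 z1 in
  let be := fourcos2 z2 in
  let ga := fourcos2 z3 in
  let S1 := s1 al be l m in
  let S2 := s2 al be l m in
  let S3 := s3 al be l m in
  let t := S1 * (S2 * S3) ^+ r1 in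
  let D := Delta al be ga l m in
  ((t ^+ 2 * (S2 * t ^+ 2 * S2) = (S2 * t ^+ 2 * S2) * t ^+ 2) ->
     [\/ D = 0,
         al = 1 /\ D = 4 - ga
       | [/\ al = 2, be = 1, ga = 2, (l = -1 /\ m = -2) &
             isom_WB3 (inG al be l m)]])
  /\
  ((t ^+ 2 * (S3 * t ^+ 2 * S3) = (S3 * t ^+ 2 * S3) * t ^+ 2) ->
     [\/ D = 0,
         be = 1 /\ D = 4 - ga
       | [/\ al = 1, be = 2, ga = 2, (l = -2 /\ m = -1) &
             isom_WB3 (inG al be l m)]]).
Proof.
move=> p3 q3 r3 pz1 pz2 pz3 lmE rE al be ga S1 S2 S3 t D.
have r1gt : (1 < r1)%N by move: r3; rewrite rE; lia.
have pz3' : (2 * r1).-primitive_root z3 by rewrite -rE.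
have lmE' : l * m = 2 + z3 + z3^-1 := lmE.
have dn : 4 - l * m != 0 := d_neq0 pz3' r1gt lmE'.
have WF : (S2 * S3) ^+ r1 = Wm l m := Wform pz3' r1gt lmE' al be.
have tE : t = s1 al be l m * Wm l m by rewrite /t WF.
have [z1n z11 z1m] := prim_ne p3 pz1.
have [z2n z21 z2m] := prim_ne q3 pz2.
have [z3n z31 z3m] := prim_ne r3 pz3.
have aln : al != 0 := fc_neq0 z1n z1m.
have ben : be != 0 := fc_neq0 z2n z2m.
have gaE : ga = l * m by rewrite lmE.
have DE : D = Dl al be l m by rewrite /D /Delta /Dl gaE.
have lm4 : l * m - 4 != 0 by rewrite -oppr_eq0 opprB.
split.
- move=> h.
  have hc : Tp al be l m * U2p al be l m = U2p al be l m * Tp al be l m.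
    have := @comm_red K al be l m dn S2; rewrite /= -tE => /(_ h).
    by rewrite /S2 LU2.
  have := E200 al be l m; rewrite hc subrr => /esym /c4 E0.
  have := E220 al be l m; rewrite hc subrr => /esym /c4' E2.
  rewrite DE gaE.
  have [D0|Dn] := eqVneq (Dl al be l m) 0; first by constructor 1.
  have [m2|m2n] := eqVneq (m + 2) 0; last first.
    move/eqP: E2; rewrite !mulf_eq0 (negbTE Dn) (negbTE dn) (negbTE m2n) (negbTE aln) /= => /eqP Q.
    have F0 : al * l + 2 * be != 0.
      apply/eqP => F0; move: Q; rewrite F0 mulr0 add0r => /eqP.
      by rewrite subr_eq0 => /eqP h4; move: lm4; rewrite h4 subrr eqxx.
    move/eqP: E0; rewrite !mulf_eq0 (negbTE Dn) (negbTE dn) (negbTE m2n) (negbTE aln) (negbTE F0) /= !orbF.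
    rewrite subr_eq0 => /eqP DD.
    have : (al - 1) * (l * m - 4) = 0.
      have -> : (al - 1) * (l * m - 4) = 2 * (Dl al be l m - (4 - l * m)) + ((m + 2) * (al * l + 2 * be) + l * m - 4) by rewrite /Dl; ring.
      by rewrite DD subrr mulr0 add0r.
    move/eqP; rewrite mulf_eq0 (negbTE lm4) orbF subr_eq0 => /eqP a1.
    by constructor 2.
  have mE : m = -2 by apply/eqP; rewrite -addr_eq0 m2.
  have := E212 al be l mE; rewrite hc subrr => /esym /c2 E1.
  move/eqP: E1; rewrite !mulf_eq0 (negbTE Dn) (negbTE dn) /= => /eqP F0.
  have eqd : fourcos2 z1 * fourcos2 z3 = 4 * fourcos2 z2.
    rewrite -/al -/be -/ga gaE mE.
    have -> : (4 : K) * be = - 2 * (- (2 * be)) by ring.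
    have -> : - (2 * be) = al * l by apply/eqP; rewrite eq_sym -addr_eq0 F0.
    by ring.
  have [e1 e3] := dio_main p3 q3 r3 pz1 pz2 pz3 eqd.
  have a2 : al = 2 := fc_m1 e1.
  have g2 : ga = 2 := fc_m1 e3.
  have h4 : (4 : K) != 0 by rewrite pnatr_eq0.
  have b1 : be = 1.
    apply: (mulfI h4); rewrite mulr1 -[4 * be]/(4 * fourcos2 z2) -eqd -/al -/ga a2 g2.
    by rewrite -natrM.
  have l1 : l = -1.
    have h2 : (2 : K) != 0 by rewrite pnatr_eq0.
    have a2' : al - 2 = 0 by apply/eqP; rewrite subr_eq0; apply/eqP.
    have b1' : be - 1 = 0 by apply/eqP; rewrite subr_eq0; apply/eqP.
    have e : 2 * (l + 1) = 0.
      rewrite (_ : 2 * (l + 1) = (al * l + 2 * be) - (al - 2) * l - 2 * (be - 1)); last by ring.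
      by rewrite F0 a2' b1'; ring.
    by move/eqP: e; rewrite mulf_eq0 (negbTE h2) /= addr_eq0 => /eqP.
  constructor 3; split => //; try (by rewrite l1 mE; ring); try (by split); rewrite a2 b1 l1 mE; exact: isoB3_1.
- move=> h.
  have hc : Tp al be l m * U3p al be l m = U3p al be l m * Tp al be l m.
    have := @comm_red K al be l m dn S3; rewrite /= -tE => /(_ h).
    by rewrite /S3 LU3.
  have := E300 al be l m; rewrite hc subrr => /esym /c4 E0.
  have := E310 al be l m; rewrite hc subrr => /esym /c4' E2.
  rewrite DE gaE.
  have [D0|Dn] := eqVneq (Dl al be l m) 0; first by constructor 1.
  have [l2|l2n] := eqVneq (l + 2) 0; last first.
    move/eqP: E2; rewrite !mulf_eq0 (negbTE Dn) (negbTE dn) (negbTE l2n) (negbTE ben) /= => /eqP Q.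
    have F0 : be * m + 2 * al != 0.
      apply/eqP => F0; move: Q; rewrite F0 mulr0 add0r => /eqP.
      by rewrite subr_eq0 => /eqP h4; move: lm4; rewrite h4 subrr eqxx.
    move/eqP: E0; rewrite !mulf_eq0 (negbTE Dn) (negbTE dn) (negbTE l2n) (negbTE ben) (negbTE F0) /= !orbF.
    rewrite subr_eq0 => /eqP DD.
    have : (be - 1) * (l * m - 4) = 0.
      have -> : (be - 1) * (l * m - 4) = 2 * (Dl al be l m - (4 - l * m)) + ((l + 2) * (be * m + 2 * al) + l * m - 4) by rewrite /Dl; ring.
      by rewrite DD subrr mulr0 add0r.
    move/eqP; rewrite mulf_eq0 (negbTE lm4) orbF subr_eq0 => /eqP b1.
    by constructor 2.
  have lE : l = -2 by apply/eqP; rewrite -addr_eq0 l2.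
  have := E321 al be m lE; rewrite hc subrr => /esym /c2 E1.
  move/eqP: E1; rewrite !mulf_eq0 (negbTE Dn) (negbTE dn) /= => /eqP F0.
  have eqd : fourcos2 z2 * fourcos2 z3 = 4 * fourcos2 z1.
    rewrite -/al -/be -/ga gaE lE.
    have -> : (4 : K) * al = - 2 * (- (2 * al)) by ring.
    have -> : - (2 * al) = be * m by apply/eqP; rewrite eq_sym -addr_eq0 F0.
    by ring.
  have [e2 e3] := dio_main q3 p3 r3 pz2 pz1 pz3 eqd.
  have b2 : be = 2 := fc_m1 e2.
  have g2 : ga = 2 := fc_m1 e3.
  have h4 : (4 : K) != 0 by rewrite pnatr_eq0.
  have a1 : al = 1.
    apply: (mulfI h4); rewrite mulr1 -[4 * al]/(4 * fourcos2 z1) -eqd -/be -/ga b2 g2.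
    by rewrite -natrM.
  have m1 : m = -1.
    have h2 : (2 : K) != 0 by rewrite pnatr_eq0.
    have b2' : be - 2 = 0 by apply/eqP; rewrite subr_eq0; apply/eqP.
    have a1' : al - 1 = 0 by apply/eqP; rewrite subr_eq0; apply/eqP.
    have e : 2 * (m + 1) = 0.
      rewrite (_ : 2 * (m + 1) = (be * m + 2 * al) - (be - 2) * m - 2 * (al - 1)); last by ring.
      by rewrite F0 b2' a1'; ring.
    by move/eqP: e; rewrite mulf_eq0 (negbTE h2) /= addr_eq0 => /eqP.
  constructor 3; split => //; try (by rewrite lE m1; ring); try (by split); rewrite a1 b2 lE m1; exact: isoB3_2.
Qed.
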